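(* Let $l<h$ be constants and $n$ a positive integer, and let $\phi_0,\phi_1,\phi_2,\ldots$ be univariate polynomials (a polynomial basis), with $\phi_i$ used for index $i$. Suppose there is a function $\xi(m)$ such that for every $m$, every $a_0,\ldots,a_m\in\mathbb{R}^d$ and the univariate polynomial $g(t)=\sum_{i=0}^m a_i\phi_i(t)$, $$\|a_i\|\le \xi(m)\max_{l\le t\le h}\|g(t)\|\quad (i=0,\ldots,m).$$ Suppose also there is a function $\zeta(m_1,\ldots,m_n)$ such that for all $\bar a_{i_1,\ldots,i_n}\in\mathbb{R}^d$ ($i_j=0,\ldots,m_j$) and $\bar g(x_1,\ldots,x_n)=\sum_{i_1=0}^{m_1}\cdots\sum_{i_n=0}^{m_n}\bar a_{i_1,\ldots,i_n}\phi_{i_1}(x_1)\cdots\phi_{i_n}(x_n)$, $$\|\bar a_{i_1,\ldots,i_n}\|\le \zeta(m_1,\ldots,m_n)\max_{l\le x_1,\ldots,x_n\le h}\|\bar g(x_1,\ldots,x_n)\|.$$ Then for all $b_{i_1,\ldots,i_{n+1}}\in\mathbb{R}^d$ ($i_j=0,\ldots,m_j$) and $f(x_1,\ldots,x_{n+1})=\sum_{i_1=0}^{m_1}\cdots\sum_{i_{n+1}=0}^{m_{n+1}} b_{i_1,\ldots,i_{n+1}}\phi_{i_1}(x_1)\cdots\phi_{i_{n+1}}(x_{n+1})$, $$\|b_{i_1,\ldots,i_{n+1}}\|\le \zeta(m_1,\ldots,m_n)\,\xi(m_{n+1})\max_{l\le x_1,\ldots,x_{n+1}\le h}\|f(x_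1,\ldots,x_{n+1})\|.$$
   Context: $\|\cdot\|$ denotes a fixed vector norm on $\mathbb{R}^d$ (the paper works with the infinity norm). *)

(* Defs.v *)
From HB Require Import structures.
From mathcomp Require Import all_boot all_order all_algebra.
From mathcomp Require Import all_classical all_reals.
Set Implicit Arguments. Unset Strict Implicit. Unset Printing Implicit Defensive.
Import Order.TTheory GRing.Theory Num.Theory.
Local Open Scope ring_scope.
Local Open Scope classical_set_scope.

Definition is_vnorm (R : realType) (d : nat) (N : 'rV[R]_d -> R) : Prop :=
  (forall x y, N (x + y) <= N x + N y) /\
  (forall (c : R) x, N (c *: x) = `|c| * N x) /\
  (forall x, N x = 0 -> x = 0).

Definition uni_eval (R : realType) (d : nat) (phi : nat -> {poly R}) (m : nat)
  (a : nat -> 'rV[R]_d) (t : R) : 'rV[R]_d :=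
  \sum_(i < m.+1) (phi i).[t] *: a i.

(* max_{l <= t <= h} N(g(t)), written as the supremum of the (attained) values. *)
Definition uni_max (R : realType) (d : nat) (N : 'rV[R]_d -> R) (l h : R)
  (g : R -> 'rV[R]_d) : R :=
  sup [set N (g t) | t in [set t : R | l <= t <= h]].

(* Multi-indices (i_1..i_n) with 0 <= i_j <= m_j, encoded as finite functions
   with values below max_j m_j + 1 and filtered by i_j <= m_j. *)
Definition mbound (n : nat) (m : 'I_n -> nat) : nat := (\max_(j < n) m j).+1.

Definition multi_eval (R : realType) (d n : nat) (phi : nat -> {poly R})
  (m : 'I_n -> nat) (a : ('I_n -> nat) -> 'rV[R]_d) (x : 'I_n -> R) : 'rV[R]_d :=
  \sum_(i : {ffun 'I_n -> 'I_(mbound m)} | [forall j, (i j <= m j)%N])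
     (\prod_(j < n) (phi (i j)).[x j]) *: a (fun j => nat_of_ord (i j)).

Definition multi_max (R : realType) (d n : nat) (N : 'rV[R]_d -> R) (l h : R)
  (g : ('I_n -> R) -> 'rV[R]_d) : R :=
  sup [set N (g x) | x in [set x : 'I_n -> R | forall j, l <= x j <= h]].

(* Main.v *)
Require Import Defs.
From HB Require Import structures.
From mathcomp Require Import all_boot all_order all_algebra.
From mathcomp Require Import all_classical all_reals.
From mathcomp Require Import ring lra.
Import Order.TTheory GRing.Theory Num.Theory.
Local Open Scope ring_scope.
Set Implicit Arguments.

Section Aux.
Variables (R : realType) (d : nat) (N : 'rV[R]_d -> R).
Hypothesis hN : is_vnorm N.

Lemma vn0 : N 0 = 0.
Proof. case: hN => _ [hs _]. by rewrite -(scale0r (0 : 'rV[R]_d)) hs normr0 mul0r. Qed.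

Lemma vn_ge0 x : 0 <= N x.
Proof.
case: hN => ht [hs _].
have h1 := ht x (- x). rewrite subrr vn0 -scaleN1r hs normrN normr1 mul1r in h1.
lra.
Qed.

Lemma vn_sum (I : Type) (r : seq I) (P : pred I) (F : I -> 'rV[R]_d) :
  N (\sum_(i <- r | P i) F i) <= \sum_(i <- r | P i) N (F i).
Proof.
apply: (big_ind2 (fun a b => N b <= a)); first by rewrite vn0.
  move=> x1 x2 y1 y2 h1 h2; case: hN => ht _.
  apply: le_trans (ht _ _) _; exact: lerD.
by [].
Qed.

Variables (l h : R).
Definition pbound (p : {poly R}) : R :=
  \sum_(i < size p) `|p`_i| * (`|l| + `|h|) ^+ i.

Lemma pbound_ok p t : l <= t <= h -> `|p.[t]| <= pbound p.
Proof.
move=> /andP[h1 h2]; rewrite horner_coef /pbound.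
apply: le_trans (ler_norm_sum _ _ _) _; apply: ler_sum => i _.
rewrite normrM normrX; apply: ler_wpM2l => //.
apply: lerXn2r; rewrite ?qualifE /= ?addr_ge0 //.
have := ler_norm h; have := normr_ge0 l; have := normr_ge0 h;
  have := ler_norm (- l); rewrite normrN.
case: (lerP 0 t) => ht.
  rewrite (ger0_norm ht); lra.
rewrite (ltr0_norm ht); lra.
Qed.

Lemma pbound_ge0 p : 0 <= pbound p.
Proof. apply: sumr_ge0 => i _; apply: mulr_ge0 => //; apply: exprn_ge0; exact: addr_ge0. Qed.

Lemma multi_bounded (n : nat) phi (m : 'I_n -> nat) a :
  exists C, forall x, (forall j, l <= x j <= h) -> N (multi_eval phi m a x) <= C.
Proof.
exists (\sum_(i : {ffun 'I_n -> 'I_(mbound m)} | [forall j, (i j <= m j)%N])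
     (\prod_(j < n) pbound (phi (i j))) * N (a (fun j => nat_of_ord (i j)))).
move=> x hx; apply: le_trans (vn_sum _ _ _) _; apply: ler_sum => i _.
case: hN => _ [hs _]; rewrite hs; apply: ler_wpM2r; first exact: vn_ge0.
rewrite normr_prod; apply: ler_prod => j _; rewrite normr_ge0 /=.
exact: pbound_ok.
Qed.

Lemma uni_bounded phi (m : nat) a :
  exists C, forall t, l <= t <= h -> N (uni_eval phi m a t) <= C.
Proof.
exists (\sum_(i < m.+1) pbound (phi i) * N (a i)).
move=> t ht; apply: le_trans (vn_sum _ _ _) _; apply: ler_sum => i _.
case: hN => _ [hs _]; rewrite hs; apply: ler_wpM2r; first exact: vn_ge0.
exact: pbound_ok.
Qed.

Lemma mm_ub (n : nat) (f : ('I_n -> R) -> 'rV[R]_d) x :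
  (exists C, forall x, (forall j, l <= x j <= h) -> N (f x) <= C) ->
  (forall j, l <= x j <= h) -> N (f x) <= multi_max N l h f.
Proof.
move=> [C hC] hx; apply: sup_upper_bound; last by exists x.
split; first by exists (N (f x)), x.
by exists C => _ [y hy <-]; exact: hC.
Qed.

Lemma um_ub (f : R -> 'rV[R]_d) t :
  (exists C, forall t, l <= t <= h -> N (f t) <= C) ->
  l <= t <= h -> N (f t) <= uni_max N l h f.
Proof.
move=> [C hC] hx; apply: sup_upper_bound; last by exists t.
split; first by exists (N (f t)), t.
by exists C => _ [y hy <-]; exact: hC.
Qed.

Hypothesis hlh : l <= h.

Lemma mm_le (n : nat) (f : ('I_n -> R) -> 'rV[R]_d) C :
  (forall x, (forall j, l <= x j <= h) -> N (f x) <= C) -> multi_max N l h f <= C.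
Proof.
move=> hC; apply: ge_sup; first by exists (N (f (fun _ => l))), (fun _ => l) => // j; rewrite lexx.
by move=> _ [y hy <-]; exact: hC.
Qed.

Lemma um_le (f : R -> 'rV[R]_d) C :
  (forall t, l <= t <= h -> N (f t) <= C) -> uni_max N l h f <= C.
Proof.
move=> hC; apply: ge_sup; first by exists (N (f l)), l => //=; rewrite lexx hlh.
by move=> _ [y hy <-]; exact: hC.
Qed.

Lemma mm_ge0 (n : nat) phi (m : 'I_n -> nat) a : 0 <= multi_max N l h (multi_eval phi m a).
Proof.
apply: le_trans (vn_ge0 (multi_eval phi m a (fun _ => l))) _.
apply: mm_ub; first exact: multi_bounded.
by move=> j; rewrite lexx.
Qed.

Lemma um_ge0 phi (m : nat) a : 0 <= uni_max N l h (uni_eval phi m a).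
Proof.
apply: le_trans (vn_ge0 (uni_eval phi m a l)) _.
apply: um_ub; first exact: uni_bounded.
by rewrite lexx.
Qed.

End Aux.

Lemma multi_eval_B (R : realType) (d n : nat) phi (m : 'I_n -> nat)
  (a : ('I_n -> nat) -> 'rV[R]_d) x (B : nat) (hB : (mbound m <= B)%N) :
  multi_eval phi m a x =
  \sum_(i : {ffun 'I_n -> 'I_B} | [forall j, (i j <= m j)%N])
     (\prod_(j < n) (phi (i j)).[x j]) *: a (fun j => nat_of_ord (i j)).
Proof.
rewrite /multi_eval.
rewrite (reindex_onto (fun f : {ffun 'I_n -> 'I_(mbound m)} => [ffun j => widen_ord hB (f j)])
   (fun g : {ffun 'I_n -> 'I_B} => [ffun j => @inord (\max_(j < n) m j) (g j)])) /=.
  apply: eq_big => [f|f _]; last first.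
    congr (_ *: a _); first by apply: eq_bigr => j _; rewrite ffunE.
    by apply: funext => j; rewrite ffunE.
  apply/idP/idP; last first.
    by move=> /andP[/forallP H _]; apply/forallP => j; have := H j; rewrite ffunE.
  move=> /forallP H; apply/andP; split.
    by apply/forallP => j; rewrite ffunE; exact: H.
  apply/eqP/ffunP => j; rewrite !ffunE; apply: val_inj => /=; rewrite inordK //.
move=> g /forallP H; apply/ffunP => j; rewrite !ffunE; apply: val_inj => /=.
rewrite inordK // ltnS; apply: leq_trans (H j) _.
exact: (@leq_bigmax_cond _ _ (fun j => m j) j).
Qed.

Definition join {n : nat} {T : Type} (f : 'I_n -> T) (z : T) (j : 'I_n.+1) : T :=
  if unlift ord_max j is Some j' then f j' else z.

Lemma widen_lift n (j : 'I_n) : widen_ord (leqnSn n) j = lift ord_max j.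
Proof. by apply: val_inj; rewrite /= /bump leqNgt ltn_ord. Qed.

Lemma unlift_widen n (j : 'I_n) : unlift ord_max (widen_ord (leqnSn n) j) = Some j.
Proof. by rewrite widen_lift liftK. Qed.

Lemma join_widen n T (f : 'I_n -> T) z j : join f z (widen_ord (leqnSn n) j) = f j.
Proof. by rewrite /join unlift_widen. Qed.

Lemma join_max n T (f : 'I_n -> T) z : join f z ord_max = z.
Proof. by rewrite /join unlift_none. Qed.

Lemma ordS_cases {n} (j : 'I_n.+1) : j = ord_max \/ exists j', j = widen_ord (leqnSn n) j'.
Proof.
case: (ltnP j n) => hj.
  by right; exists (Ordinal hj); apply: val_inj.
left; apply: val_inj => /=; apply/eqP; rewrite eqn_leq hj andbT -ltnS; exact: ltn_ord.
Qed.

Lemma join_eta n T (g : 'I_n.+1 -> T) :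
  join (fun j => g (widen_ord (leqnSn n) j)) (g ord_max) = g.
Proof.
apply: functional_extensionality_dep => j.
case: (ordS_cases j) => [hj|[j' hj]]; rewrite hj.
  by rewrite join_max.
by rewrite join_widen.
Qed.

Lemma split_eval (R : realType) (d n : nat) phi (m : 'I_n.+1 -> nat)
  (b : ('I_n.+1 -> nat) -> 'rV[R]_d) (x' : 'I_n -> R) t :
  uni_eval phi (m ord_max)
    (fun k => multi_eval phi (fun j => m (widen_ord (leqnSn n) j))
                (fun i' => b (join i' k)) x') t
  = multi_eval phi m b (join x' t).
Proof.
set m' := fun j => m (widen_ord (leqnSn n) j).
have hB : (mbound m' <= mbound m)%N.
  rewrite /mbound ltnS big_ord_recr /=; exact: leq_maxl.
have hM : ((m ord_max).+1 <= mbound m)%N.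
  rewrite /mbound ltnS big_ord_recr /=; exact: leq_maxr.
rewrite /uni_eval.
under eq_bigr do rewrite (@multi_eval_B _ _ _ _ m' _ _ _ hB) scaler_sumr.
rewrite (big_ord_widen _ (fun k : nat => \sum_(i0 : {ffun 'I_n -> 'I_(mbound m)} | [forall j, (i0 j <= m' j)%N]) (phi k).[t] *: (\prod_(j < n) (phi (i0 j)).[x' j] *: b (join (fun j => nat_of_ord (i0 j)) k))) hM).
rewrite pair_big /= /multi_eval.
rewrite (reindex (fun p : 'I_(mbound m) * {ffun 'I_n -> 'I_(mbound m)} => [ffun j => join p.2 p.1 j])) /=; last first.
  apply: onW_bij.
  exists (fun g : {ffun 'I_n.+1 -> 'I_(mbound m)} => (g ord_max, [ffun j => g (widen_ord (leqnSn n) j)])).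
    move=> [k f] /=; rewrite ffunE join_max; congr pair; apply/ffunP => j.
    by rewrite !ffunE join_widen.
  move=> g; apply/ffunP => j; rewrite ffunE /=.
  case: (ordS_cases j) => [hj|[j' hj]]; rewrite hj.
    by rewrite join_max.
  by rewrite join_widen ffunE.
apply: eq_big => [[k f]|[k f] _] /=.
  apply/idP/idP.
    move=> /andP[hk /forallP hf]; apply/forallP => j; rewrite ffunE.
    case: (ordS_cases j) => [hj|[j' hj]]; rewrite hj ?join_max ?join_widen //.
  move=> /forallP H; apply/andP; split.
    by have := H ord_max; rewrite ffunE join_max.
  by apply/forallP => j; have := H (widen_ord (leqnSn n) j); rewrite ffunE join_widen.
rewrite scalerA big_ord_recr /= ffunE !join_max mulrC.
congr (_ * _ *: b _).
  by apply: eq_bigr => j _; rewrite ffunE !join_widen.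
apply: functional_extensionality_dep => j; rewrite ffunE.
by case: (ordS_cases j) => [hj|[j' hj]]; rewrite hj ?join_max ?join_widen.
Qed.

Unset Implicit Arguments.

Theorem lemma1 (R : realType) (d n : nat) (N : 'rV[R]_d -> R) (l h : R)
  (phi : nat -> {poly R}) (xi : nat -> R) (zeta : ('I_n -> nat) -> R) :
  is_vnorm N -> l < h -> (0 < n)%N ->
  (forall (m : nat) (a : nat -> 'rV[R]_d) (i : nat), (i <= m)%N ->
     N (a i) <= xi m * uni_max N l h (uni_eval phi m a)) ->
  (forall (m : 'I_n -> nat) (a : ('I_n -> nat) -> 'rV[R]_d) (i : 'I_n -> nat),
     (forall j, (i j <= m j)%N) ->
     N (a i) <= zeta m * multi_max N l h (multi_eval phi m a)) ->
  forall (m : 'I_n.+1 -> nat) (b : ('I_n.+1 -> nat) -> 'rV[R]_d)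
         (i : 'I_n.+1 -> nat),
    (forall j, (i j <= m j)%N) ->
    N (b i) <= zeta (fun j : 'I_n => m (widen_ord (leqnSn n) j)) * xi (m ord_max)
               * multi_max N l h (multi_eval phi m b).
Proof.
move=> hN hlh hn0 Hxi Hzeta m b i Hi.
have hlh' : l <= h by exact: ltW.
set m' := fun j : 'I_n => m (widen_ord (leqnSn n) j).
set i' := fun j : 'I_n => i (widen_ord (leqnSn n) j).
set k0 := i ord_max.
set M := multi_max N l h (multi_eval phi m b).
have M0 : 0 <= M by exact: mm_ge0.
have hbi : b i = b (join i' k0) by rewrite /i' /k0 join_eta.
case: (pselect (exists v, 0 < N v)) => [[v hv]|nov]; last first.
  have z : forall v, N v = 0.
    move=> v; apply/eqP; rewrite eq_le vn_ge0 // andbT leNgt; apply/negP => hv.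
    by apply: nov; exists v.
  have -> : M = 0.
    by apply/eqP; rewrite eq_le M0 andbT; apply: mm_le => // x _; rewrite z.
  by rewrite z mulr0.
have hi' : forall j, (i' j <= m' j)%N by move=> j; exact: Hi.
have zeta0 : 0 <= zeta m'.
  have := Hzeta m' (fun _ => v) i' hi'.
  have := mm_ge0 hN l h hlh' phi m' (fun _ => v). nra.
have xi0 : 0 <= xi (m ord_max).
  have := Hxi (m ord_max) (fun _ => v) 0%N (leq0n _).
  have := um_ge0 hN l h hlh' phi (m ord_max) (fun _ => v). nra.
have H1 := Hzeta m' (fun i'' => b (join i'' k0)) i' hi'.
rewrite /= -hbi in H1.
apply: le_trans H1 _; rewrite -mulrA; apply: ler_wpM2l => //.
apply: mm_le => // x' hx'.
have := Hxi (m ord_max) (fun k => multi_eval phi m' (fun i'' => b (join i'' k)) x') k0 (Hi ord_max).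
move=> /le_trans; apply; apply: ler_wpM2l => //.
apply: um_le => // t ht.
rewrite split_eval; apply: mm_ub; first exact: multi_bounded.
move=> j; case: (ordS_cases j) => [hj|[j' hj]]; rewrite hj ?join_max ?join_widen //.
Qed.
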